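(* Let $(M,\Sigma)$ be a measurable space, let $r\ge 1$, and let $\psi_1,\dots,\psi_r\colon\Sigma\to\mathbb{R}$ be non-atomic countably additive charges. Then there exists (and can be obtained by an explicit construction) a strong solution to the fair division problem for $\psi_1,\dots,\psi_r$, i.e. a partition $M=F_1\sqcup\dots\sqcup F_r$ into measurable sets with $\psi_i(F_i)\ge\psi_i(F_j)$ for all $i,j\in\{1,\dots,r\}$.
   Context: A charge is a countably additive real-valued (hence finite) signed measure $\psi\colon\Sigma\to\mathbb{R}$. By the Hahn–Jordan decomposition there is a measurable partition $M=A^+\sqcup A^-$ with $\psi(a)\ge0$ for measurable $a\subseteq A^+$ and $\psi(b)\le 0$ for measurable $b\subseteq A^-$, so $\psi=\mu^+-\mu^-$ where $\mu^\pm$ are the (nonnegative) measures $\mu^+(E)=\psi(E\cap A^+)$, $\mu^-(E)=-\psi(E\cap A^-)$. The charge $\psi$ is called non-atomic if both $\mu^+$ and $\mu^-$ are non-atomic measures. Partition elements are allowed to be empty. *)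

(* Defs.v *)
From HB Require Import structures.
From mathcomp Require Import all_boot all_order all_algebra.
From mathcomp Require Import all_classical all_reals all_analysis.
Set Implicit Arguments. Unset Strict Implicit. Unset Printing Implicit Defensive.
Import Order.TTheory GRing.Theory Num.Theory.
Local Open Scope classical_set_scope.
Local Open Scope ring_scope.
Local Open Scope ereal_scope.

Definition is_atom d (T : measurableType d) (R : realType)
  (mu : set T -> \bar R) (A : set T) : Prop :=
  [/\ measurable A, 0 < mu A &
      forall B, measurable B -> B `<=` A -> mu B = 0 \/ mu B = mu A].

Definition nonatomic d (T : measurableType d) (R : realType)
  (mu : set T -> \bar R) : Prop := forall A, ~ is_atom mu A.

(* A charge is non-atomic if, for a Hahn decomposition M = A+ ⊔ A-,
   both parts of the Jordan decomposition mu+ (E) = psi (E ∩ A+)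
   and mu- (E) = - psi (E ∩ A-) are non-atomic measures. *)
Definition charge_nonatomic d (T : measurableType d) (R : realType)
  (psi : {charge set T -> \bar R}) : Prop :=
  exists P N, [/\ hahn_decomposition psi P N,
    nonatomic (fun E => psi (E `&` P)) &
    nonatomic (fun E => - psi (E `&` N))].

(* Main.v *)
Require Import Defs.
From HB Require Import structures.
From mathcomp Require Import all_boot all_order all_algebra.
From mathcomp Require Import all_classical all_reals all_analysis.
From mathcomp Require Import ring lra.
Import Order.TTheory GRing.Theory Num.Theory.
Set Implicit Arguments. Unset Strict Implicit. Unset Printing Implicit Defensive.
Local Open Scope classical_set_scope.
Local Open Scope ring_scope.

Section Abstract.
Context d (T : measurableType d) (R : realType).

Definition rm (m : set T -> R) :=
  [/\ forall A, measurable A -> 0 <= m A,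
      forall A B, measurable A -> measurable B -> A `&` B = set0 ->
        m (A `|` B) = m A + m B &
      forall (F : nat -> set T) c, (forall n, measurable (F n)) ->
        (forall n, F n `<=` F n.+1) -> (forall n, m (F n) <= c) ->
        m (\bigcup_n F n) <= c].

Definition na (m : set T -> R) := forall A, measurable A -> 0 < m A ->
  exists B, [/\ measurable B, B `<=` A, 0 < m B & m B < m A].

Variable m : set T -> R.
Hypothesis hm : rm m.

Lemma m_ge0 [A] : measurable A -> 0 <= m A.
Proof. by case: hm => h _ _; apply: h. Qed.

Lemma m_add [A B] : measurable A -> measurable B -> A `&` B = set0 ->
  m (A `|` B) = m A + m B.
Proof. by case: hm => _ h _; apply: h. Qed.

Lemma m_cont (F : nat -> set T) c : (forall n, measurable (F n)) ->
  (forall n, F n `<=` F n.+1) -> (forall n, m (F n) <= c) ->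
  m (\bigcup_n F n) <= c.
Proof. by case: hm => _ _ h; apply: h. Qed.

Lemma m0 : m set0 = 0.
Proof.
have := m_add measurable0 measurable0 (setI0 set0).
rewrite setU0 => h; lra.
Qed.

Lemma mD [A B] : measurable A -> measurable B -> B `<=` A ->
  m (A `\` B) = m A - m B.
Proof.
move=> mA mB BA.
have := m_add mB (measurableD mA mB) (_ : B `&` (A `\` B) = set0).
rewrite setDUK // => ->; first lra.
by rewrite setDE setICA setICr setI0.
Qed.

Lemma mle [A B] : measurable A -> measurable B -> B `<=` A -> m B <= m A.
Proof.
move=> mA mB BA; have := mD mA mB BA; have := m_ge0 (measurableD mA mB); lra.
Qed.

Lemma m_cont_dec (F : nat -> set T) c : (forall n, measurable (F n)) ->
  (forall n, F n.+1 `<=` F n) -> (forall n, c <= m (F n)) ->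
  c <= m (\bigcap_n F n).
Proof.
move=> mF dF cF.
have dec : forall n k, (n <= k)%N -> F k `<=` F n.
  move=> n k /subnK <-; elim: (k - n)%N => //= j IH.
  by rewrite addSn; apply: subset_trans IH; apply: dF.
have mI : measurable (\bigcap_n F n) by apply: bigcapT_measurable.
have sub : \bigcap_n F n `<=` F 0 by move=> x; apply.
have := @m_cont (fun n => F 0 `\` F n) (m (F 0) - c).
have -> : \bigcup_n (F 0 `\` F n) = F 0 `\` \bigcap_n F n.
  apply/seteqP; split => x.
    by case=> n _ [h1 h2]; split => // h; apply: h2; apply: h.
  case=> h1 h2; have [n hn] : exists n, ~ F n x.
    apply: contrapT => hh; apply: h2 => n _; apply: contrapT => hn.
    by apply: hh; exists n.
  by exists n.
have mG : forall n, measurable (F 0 `\` F n) by move=> n; apply: measurableD.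
have iG : forall n, F 0 `\` F n `<=` F 0 `\` F n.+1.
  by move=> n x [h1 h2]; split => // h; apply: h2; apply: dF.
have bG : forall n, m (F 0 `\` F n) <= m (F 0) - c.
  by move=> n; rewrite mD //; [have := cF n; lra | exact: dec].
move=> /(_ mG iG bG); rewrite mD //; lra.
Qed.

Lemma pow2_big (x : R) : exists k : nat, x < 2 ^+ k.
Proof.
case: (lerP x 0) => hx; first by exists 0%N; rewrite expr0; lra.
have := archi_boundP (ltW hx); set n := Num.Def.archi_bound x => h.
exists n; apply: lt_le_trans h _; rewrite -natrX ler_nat; apply: ltnW.
exact: ltn_expl.
Qed.

Lemma small (hna : na m) A : measurable A -> 0 < m A -> forall e, 0 < e ->
  exists B, [/\ measurable B, B `<=` A, 0 < m B & m B <= e].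
Proof.
move=> mA pA e e0.
have H : forall k, exists B, [/\ measurable B, B `<=` A, 0 < m B &
    m B * 2 ^+ k <= m A].
  elim=> [|k [B [mB BA pB hB]]].
    by exists A; split; rewrite ?expr0 ?mulr1.
  have [C [mC CB pC hC]] := hna B mB pB.
  have p2 : 0 <= (2 : R) ^+ k by apply: exprn_ge0.
  case: (lerP (m C) (m B / 2)) => hC2.
    exists C; split => //; first by apply: subset_trans BA.
    rewrite exprS mulrA; apply: le_trans hB; apply: ler_wpM2r => //; lra.
  exists (B `\` C); split.
  - exact: measurableD.
  - by move=> x [] /BA.
  - rewrite mD //; lra.
  - rewrite mD // exprS mulrA; apply: le_trans hB; apply: ler_wpM2r => //; lra.
have [k hk] := pow2_big (m A / e).
have [B [mB BA pB hB]] := H k.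
exists B; split => //.
have p2 : 0 < (2 : R) ^+ k by apply: exprn_gt0.
move: hk; rewrite ltr_pdivrMr // => hk.
have : m B * 2 ^+ k < e * 2 ^+ k by apply: le_lt_trans hB _; rewrite mulrC.
by rewrite ltr_pM2r // => /ltW.
Qed.

Lemma sierp (hna : na m) A x : measurable A -> 0 <= x <= m A ->
  exists E, [/\ measurable E, E `<=` A & m E = x].
Proof.
move=> mA /andP[x0 xA].
have step : forall E : set T, exists B : set T,
   (measurable E -> E `<=` A -> m E <= x ->
   [/\ measurable B, B `<=` A `\` E, m E + m B <= x &
     forall C, measurable C -> C `<=` A `\` E -> m E + m C <= x ->
       m C <= 2 * m B]).
  move=> E; case: (pselect (measurable E /\ E `<=` A /\ m E <= x)); last first.
    by move=> hn; exists set0 => h1 h2 h3; exfalso; apply: hn.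
  case=> mE [EA Ex].
  pose S := [set y | exists C, [/\ measurable C, C `<=` A `\` E,
     m E + m C <= x & y = m C]].
  have hS : has_sup S.
    split; first by exists 0; exists set0; rewrite m0; split => //; lra.
    exists (x - m E) => y [C [mC _ hC ->]]; lra.
  have ub := sup_upper_bound hS.
  case: (lerP (sup S) 0) => hs.
    exists set0 => _ _ _; split => //; first by rewrite m0; lra.
    move=> C mC CAE hC; rewrite m0 mulr0.
    have : S (m C) by exists C.
    by move=> /ub h; apply: le_trans hs.
  have [y [C [mC CAE hC ->]] hy] := sup_adherent (divr_gt0 hs (ltr0n R 2)) hS.
  exists C => _ _ _; split => // C' mC' CAE' hC'.
  have : S (m C') by exists C'.
  move=> /ub h; lra.
have [f hf] := choice step.
pose E := fix E k := if k is k'.+1 then E k' `|` f (E k') else set0.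
have inv : forall k, [/\ measurable (E k), E k `<=` A & m (E k) <= x].
  elim=> [|k [mE EA Ex]] /=; first by rewrite m0; split.
  have [mB BAE hB _] := hf _ mE EA Ex.
  split; first exact: measurableU.
  - by move=> z [/EA|/BAE []].
  - rewrite m_add //; apply/seteqP; split => z //= [] ez /BAE [].
    by move=> _ /(_ ez).
have mEk k : measurable (E k) by case: (inv k).
have incr : forall k, E k `<=` E k.+1 by move=> k z /= ez; left.
have EU : m (\bigcup_k E k) <= x by apply: m_cont => // k; case: (inv k).
have mEU : measurable (\bigcup_k E k) by apply: bigcupT_measurable.
have EUA : \bigcup_k E k `<=` A by move=> z [k _]; case: (inv k) => _ + _; apply.
exists (\bigcup_k E k); split => //.
apply/eqP; rewrite eq_le EU /=; rewrite leNgt; apply/negP => hlt.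
have pos : 0 < m (A `\` \bigcup_k E k).
  rewrite mD //; lra.
have e0 : 0 < x - m (\bigcup_k E k) by lra.
have [C [mC CA pC hC]] := small hna (measurableD mA mEU) pos e0.
have adm : forall k, m C <= 2 * m (f (E k)).
  move=> k; have [mk Ak xk] := inv k.
  have [_ _ _ h] := hf _ mk Ak xk; apply: h => //.
    by move=> z /CA [az nz]; split => // ez; apply: nz; exists k.
  have : m (E k) <= m (\bigcup_k E k) by apply: mle => // z ez; exists k.
  lra.
have lb : forall k, k%:R * (m C / 2) <= m (E k).
  elim=> [|k IH]; first by rewrite mul0r /= m0.
  have -> : E k.+1 = E k `|` f (E k) by [].
  have -> : (k.+1)%:R * (m C / 2) = k%:R * (m C / 2) + m C / 2.
    by rewrite -natr1 mulrDl mul1r.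
  have [mk Ak xk] := inv k.
  have [mB BAE _ _] := hf _ mk Ak xk.
  rewrite m_add //; last first.
    apply/seteqP; split => z //= [] ez /BAE [].
    by move=> _ /(_ ez).
  have := adm k; lra.
have hC2 : 0 < m C / 2 by lra.
have := archi_boundP (divr_ge0 x0 (ltW hC2)).
set n := Num.Def.archi_bound _ => hn.
have [_ _ xn] := inv n.
have := lb n; move: hn; rewrite ltr_pdivrMr //; lra.
Qed.

End Abstract.

Section Halve.
Context d (T : measurableType d) (R : realType).

Lemma le_pow2 (x y : R) : (forall k, x * 2 ^+ k <= y) -> x <= 0.
Proof.
move=> h; rewrite leNgt; apply/negP => x0.
have [k hk] := pow2_big (y / x).
have := h k; move: hk; rewrite ltr_pdivrMr // mulrC; lra.
Qed.

Definition disj (A B : set T) := forall x, A x -> B x -> False.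

Lemma disjI (A B : set T) : disj A B -> A `&` B = set0.
Proof. by move=> h; apply/seteqP; split => x // [] /h hh /hh. Qed.

Lemma m_addD (m : set T -> R) (hm : rm m) A B : measurable A -> measurable B ->
  disj A B -> m (A `|` B) = m A + m B.
Proof. by move=> mA mB /disjI; apply: m_add. Qed.

Definition good (s : seq (set T -> R)) := forall m, List.In m s -> rm m /\ na m.

Theorem halve s : good s -> forall A, measurable A ->
  exists E, [/\ measurable E, E `<=` A & forall m, List.In m s -> m E = m A / 2].
Proof.
elim: s => [|nu s IH] gs A mA; first by exists A; split => // m [].
have gs' : good s by move=> m hm; apply: gs; right.
have [hnu nanu] : rm nu /\ na nu by apply: gs; left.
have {}IH := IH gs'.
have rmS : forall m, List.In m s -> rm m by move=> m /gs' [].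
have [hh hhP] : {hh : set T -> set T & forall X, measurable X ->
    [/\ measurable (hh X), hh X `<=` X &
     forall m, List.In m s -> m (hh X) = m X / 2]}.
  apply: (@choice _ _ (fun X Y => measurable X ->
    [/\ measurable Y, Y `<=` X &
     forall m, List.In m s -> m Y = m X / 2])) => X.
  case: (pselect (measurable X)) => mX.
    by have [E hE] := IH X mX; exists E.
  by exists set0.
pose half := nu A / 2.
pose nxt (t : set T * set T * set T) : set T * set T * set T :=
  let: (J, P, Q) := t in
  if half <= nu (J `|` hh P `|` hh Q) then (J `|` hh P, P `\` hh P, hh Q)
  else (J `|` hh Q, hh P, Q `\` hh Q).
pose G := hh A.
pose C := A `\` G.
pose init : set T * set T * set T :=
  if nu G <= half then (set0, G, C) else (set0, C, G).
pose st k := iter k nxt init.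
pose Inv k (t : set T * set T * set T) := let: (J, P, Q) := t in
  [/\ measurable J, measurable P & measurable Q] /\
  [/\ J `<=` A, P `<=` A & Q `<=` A] /\
  [/\ disj J P, disj J Q & disj P Q] /\
  (forall m, List.In m s ->
     [/\ m J + m P = m A / 2, m P = m Q & m P * 2 ^+ k <= m A]) /\
  nu J + nu P <= half /\ half <= nu J + nu Q.
have invk : forall k, Inv k (st k).
  elim=> [|k IHk].
    rewrite /st /=.
    have [mG GA eG] := hhP A mA.
    have mC : measurable C := measurableD mA mG.
    have eC : forall m, List.In m s -> m C = m A / 2.
      by move=> m hm; rewrite /C (mD (rmS m hm)) // eG //; lra.
    have nuC : nu C = nu A - nu G by rewrite /C (mD hnu).
    have dGC : disj G C by move=> x gx [_ /(_ gx)].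
    have ge0 : forall m, List.In m s -> m G * 2 ^+ 0 <= m A.
      move=> m hm; rewrite expr0 mulr1 eG //.
      have := m_ge0 (rmS m hm) mA; lra.
    rewrite /init; case: ifP => hG /=.
    - split; first by split => //; exact: measurable0.
      split; first by split; [move=> x [] | exact: GA | move=> x []].
      split; first by split; [move=> x [] | move=> x [] | exact: dGC].
      split; last by rewrite (m0 hnu) nuC; move: hG; rewrite /half; lra.
      move=> m hm; rewrite (m0 (rmS m hm)) add0r eG // eC //; split => //.
      by have := ge0 m hm; rewrite eG.
    - split; first by split => //; exact: measurable0.
      split; first by split; [move=> x [] | move=> x [] | exact: GA].
      split; first by split; [move=> x [] | move=> x [] | move=> x cx gx; exact: dGC gx cx].
      split; last by rewrite (m0 hnu) nuC; move/negbT: hG; rewrite -ltNge /half; lra.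
      move=> m hm; rewrite (m0 (rmS m hm)) add0r eG // eC //; split => //.
      by have := ge0 m hm; rewrite eG // eC.
  move: IHk; rewrite /st iterS; case: (iter k nxt init) => [[J P] Q].
  move=> [[mJ mP mQ] [[JA PA QA] [[dJP dJQ dPQ] [hs [nu1 nu2]]]]].
  have [mH1 H1P eH1] := hhP P mP; have [mH2 H2Q eH2] := hhP Q mQ.
  have dJH1 : disj J (hh P) by move=> x jx /H1P; apply: dJP.
  have dJH2 : disj J (hh Q) by move=> x jx /H2Q; apply: dJQ.
  have dH1H2 : disj (hh P) (hh Q) by move=> x /H1P px /H2Q; apply: dPQ px.
  have nuM : nu (J `|` hh P `|` hh Q) = nu J + nu (hh P) + nu (hh Q).
    rewrite (m_addD hnu) ?(m_addD hnu) //; first exact: measurableU.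
    by move=> x [jx|h1x] h2x; [exact: dJH2 jx h2x | exact: dH1H2 h1x h2x].
  rewrite /nxt /=; case: ifP => hc; rewrite /Inv /=.
  - split; first by split; [exact: measurableU | exact: measurableD | exact: mH2].
    split.
      split; [by move=> x [/JA|/H1P/PA] | by move=> x [/PA] | by move=> x /H2Q/QA].
    split.
      split.
      + by move=> x [jx|h1x] [px nh1]; [exact: dJP jx px | exact: nh1 h1x].
      + by move=> x [jx|h1x] h2x; [exact: dJH2 jx h2x | exact: dH1H2 h1x h2x].
      + by move=> x [px _] /H2Q; exact: dPQ px.
    split.
      move=> m hm; have hm' := rmS m hm; have [e1 e2 e3] := hs m hm.
      rewrite (m_addD hm') // (mD hm') // eH1 // eH2 //.
      split; [lra | lra |].
      rewrite exprS mulrA.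
      have -> : (m P - m P / 2) * 2 = m P by lra.
      exact: e3.
    rewrite (m_addD hnu) // (mD hnu) //; rewrite nuM in hc; split; lra.
  - move/negbT: hc; rewrite -ltNge nuM => hc.
    split; first by split; [exact: measurableU | exact: mH1 | exact: measurableD].
    split.
      split; [by move=> x [/JA|/H2Q/QA] | by move=> x /H1P/PA | by move=> x [/QA]].
    split.
      split.
      + by move=> x [jx|h2x] h1x; [exact: dJH1 jx h1x | exact: dH1H2 h1x h2x].
      + by move=> x [jx|h2x] [qx nh2]; [exact: dJQ jx qx | exact: nh2 h2x].
      + by move=> x /H1P px [qx _]; exact: dPQ px qx.
    split.
      move=> m hm; have hm' := rmS m hm; have [e1 e2 e3] := hs m hm.
      rewrite (m_addD hm') // (mD hm') // eH1 // eH2 //.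
      split; [lra | lra |].
      rewrite exprS mulrA.
      have -> : (m P / 2) * 2 = m P by lra.
      exact: e3.
    rewrite (m_addD hnu) // (mD hnu) //; split; lra.
pose Jk k := (st k).1.1.
pose Pk k := (st k).1.2.
pose Qk k := (st k).2.
pose Uk k := Jk k `|` Pk k `|` Qk k.
have stE : forall k, st k = (Jk k, Pk k, Qk k).
  by move=> k; rewrite /Jk /Pk /Qk; case: (st k) => [[]].
have stS : forall k, st k.+1 = nxt (st k) by move=> k; rewrite /st iterS.
have fk : forall k, Inv k (Jk k, Pk k, Qk k) by move=> k; rewrite -stE.
have mono : forall k, Jk k `<=` Jk k.+1 /\ Uk k.+1 `<=` Uk k.
  move=> k; have := invk k; rewrite /Uk /Jk /Pk /Qk stS.
  case: (st k) => [[J P] Q] [[mJ mP mQ] _] /=.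
  have [_ H1P _] := hhP P mP; have [_ H2Q _] := hhP Q mQ.
  rewrite /nxt /=; case: ifP => _ /=; split.
  - by move=> x jx; left.
  - move=> x [[[jx|/H1P px]|[px _]]|/H2Q qx].
    + by left; left.
    + by left; right.
    + by left; right.
    + by right.
  - by move=> x jx; left.
  - move=> x [[[jx|/H2Q qx]|/H1P px]|[qx _]].
    + by left; left.
    + by right.
    + by left; right.
    + by right.
have mJk : forall k, measurable (Jk k) by move=> k; have /= [[]] := fk k.
have mPk : forall k, measurable (Pk k) by move=> k; have /= [[]] := fk k.
have mQk : forall k, measurable (Qk k) by move=> k; have /= [[]] := fk k.
have mUk : forall k, measurable (Uk k).
  by move=> k; apply: measurableU; [apply: measurableU|].
pose Iinf := \bigcup_k Jk k.
pose Uinf := \bigcap_k Uk k.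
have mI : measurable Iinf by apply: bigcupT_measurable.
have mU : measurable Uinf by apply: bigcapT_measurable.
have nuI : nu Iinf <= half.
  apply: (m_cont hnu) => // [k|k]; first by case: (mono k).
  have /= [_ [_ [_ [_ [h _]]]]] := fk k.
  have := m_ge0 hnu (mPk k); lra.
have nuU : half <= nu Uinf.
  apply: (m_cont_dec hnu) => // [k|k]; first by case: (mono k).
  have /= [_ [_ [[dJP dJQ dPQ] [_ [_ h]]]]] := fk k.
  rewrite /Uk (m_addD hnu) ?(m_addD hnu) //; first last.
  - by move=> x [jx|px] qx; [exact: dJQ jx qx | exact: dPQ px qx].
  - exact: measurableU.
  have := m_ge0 hnu (mPk k); lra.
pose W := Uinf `\` Iinf.
have mW : measurable W by apply: measurableD.
have dWI : disj W Iinf by move=> x [_ h] /h.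
have nuW : nu Uinf <= nu W + nu Iinf.
  rewrite -(m_addD hnu) //; apply: (mle hnu) => //; first exact: measurableU.
  move=> x ux; case: (pselect (Iinf x)) => ix; [by right | by left].
have [Z [mZ ZW nuZ]] := @sierp _ _ _ nu hnu nanu W (half - nu Iinf) mW
  (ltac:(apply/andP; split; lra)).
have dIZ : disj Iinf Z by move=> x ix /ZW [_ /(_ ix)].
exists (Iinf `|` Z); split.
- exact: measurableU.
- move=> x [[k _ jx]|/ZW [ux _]].
    by have /= [_ [[JA _ _] _]] := fk k; apply: JA.
  have /= [_ [[JA PA QA] _]] := fk 0.
  by case: (ux 0 I) => [[/JA|/PA]|/QA].
- move=> m [<-|hm].
    by rewrite (m_addD hnu) // nuZ /half; lra.
  have hm' := rmS m hm.
  have ZPQ : forall k, Z `<=` Pk k `|` Qk k.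
    move=> k x /ZW [ux nix]; case: (ux k I) => [[jx|px]|qx].
    - by exfalso; apply: nix; exists k.
    - by left.
    - by right.
  have mZ0 : m Z = 0.
    apply/eqP; rewrite eq_le (m_ge0 hm' mZ) andbT.
    apply: (@le_pow2 _ (2 * m A)) => k.
    have /= [_ [_ [[_ _ dPQ] [hs _]]]] := fk k.
    have [e1 e2 e3] := hs m hm.
    have : m Z <= 2 * m (Pk k).
      have := mle hm' (measurableU _ _ (mPk k) (mQk k)) mZ (ZPQ k).
      rewrite (m_addD hm') //; lra.
    move=> h; apply: le_trans (_ : 2 * m (Pk k) * 2 ^+ k <= _).
      by apply: ler_wpM2r => //; apply: exprn_ge0.
    rewrite -mulrA; lra.
  have mIle : m Iinf <= m A / 2.
    apply: (m_cont hm') => // [k|k]; first by case: (mono k).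
    have /= [_ [_ [_ [hs _]]]] := fk k.
    have [e1 e2 e3] := hs m hm.
    have := m_ge0 hm' (mPk k); lra.
  have mIge : m A / 2 - m Iinf <= 0.
    apply: (@le_pow2 _ (m A)) => k.
    have /= [_ [_ [_ [hs _]]]] := fk k.
    have [e1 e2 e3] := hs m hm.
    have : m (Jk k) <= m Iinf by apply: (mle hm') => // x jx; exists k.
    move=> h; apply: le_trans e3; apply: ler_wpM2r; first exact: exprn_ge0.
    lra.
  rewrite (m_addD hm') // mZ0; lra.
Qed.

Lemma halve_fun s : good s -> {hh : set T -> set T & forall X, measurable X ->
    [/\ measurable (hh X), hh X `<=` X &
     forall m, List.In m s -> m (hh X) = m X / 2]}.
Proof.
move=> gs.
apply: (@choice _ _ (fun X Y => measurable X ->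
    [/\ measurable Y, Y `<=` X &
     forall m, List.In m s -> m Y = m X / 2])) => X.
case: (pselect (measurable X)) => mX.
  by have [E hE] := halve gs mX; exists E.
by exists set0.
Qed.

Theorem fraction s : good s -> forall A (t : R), measurable A -> 0 <= t <= 1 ->
  exists E, [/\ measurable E, E `<=` A & forall m, List.In m s -> m E = t * m A].
Proof.
move=> gs A t mA /andP[t0 t1].
have rmS : forall m, List.In m s -> rm m by move=> m /gs [].
have [hh hhP] := halve_fun gs.
pose nxt (st : set T * set T * R) : set T * set T * R :=
  let: (E, Q, u) := st in
  if 1 / 2 <= u then (E `|` hh Q, Q `\` hh Q, 2 * u - 1) else (E, hh Q, 2 * u).
pose st k := iter k nxt (set0, A, t).
pose Inv k (st : set T * set T * R) := let: (E, Q, u) := st in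
  [/\ measurable E, measurable Q, E `<=` A, Q `<=` A & disj E Q] /\
  (0 <= u /\ u <= 1) /\
  (forall m, List.In m s -> m E + u * m Q = t * m A /\ m Q * 2 ^+ k = m A).
have invk : forall k, Inv k (st k).
  elim=> [|k IHk].
    rewrite /st /=; split; first by split => //; move=> x [].
    split; first by split.
    move=> m hm; rewrite (m0 (rmS m hm)) add0r expr0 mulr1; by split.
  move: IHk; rewrite /st iterS; case: (iter k nxt (set0, A, t)) => [[E Q] u].
  move=> [[mE mQ EA QA dEQ] [[u0 u1] hs]].
  have [mH HQ eH] := hhP Q mQ.
  rewrite /nxt /=; case: ifP => hc; rewrite /Inv /=.
  - split.
      split; [exact: measurableU | exact: measurableD | | by move=> x [/QA] |].
        by move=> x [/EA|/HQ/QA].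
      move=> x [ex|hx] [qx nhx]; [exact: dEQ ex qx | exact: nhx hx].
    split; first by split; lra.
    move=> m hm; have hm' := rmS m hm; have [e1 e2] := hs m hm.
    rewrite (m_addD hm') //; last by move=> x ex /HQ; apply: dEQ.
    rewrite (mD hm') // eH //; split.
      by rewrite -e1; field.
    by rewrite exprS mulrA -e2; field.
  - move/negbT: hc; rewrite -ltNge => hc.
    split.
      split => //; first by move=> x /HQ/QA.
      by move=> x ex /HQ; apply: dEQ.
    split; first by split; lra.
    move=> m hm; have hm' := rmS m hm; have [e1 e2] := hs m hm.
    rewrite eH //; split.
      by rewrite -e1; field.
    by rewrite exprS mulrA -e2; field.
pose Ek k := (st k).1.1.
pose Qk k := (st k).1.2.
pose uk k := (st k).2.
have stE : forall k, st k = (Ek k, Qk k, uk k).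
  by move=> k; rewrite /Ek /Qk /uk; case: (st k) => [[]].
have fk : forall k, Inv k (Ek k, Qk k, uk k) by move=> k; rewrite -stE.
have mono : forall k, Ek k `<=` Ek k.+1.
  move=> k; rewrite /Ek /st iterS -/(st k).
  case: (st k) => [[E Q] u] /=; rewrite /nxt /=.
  by case: ifP => _ x ex //=; left.
have mEk : forall k, measurable (Ek k) by move=> k; have /= [[]] := fk k.
have mQk : forall k, measurable (Qk k) by move=> k; have /= [[]] := fk k.
have mEU : measurable (\bigcup_k Ek k) by apply: bigcupT_measurable.
exists (\bigcup_k Ek k); split => //.
  by move=> x [k _]; have /= [[_ _ EA _ _] _] := fk k; apply: EA.
move=> m hm; have hm' := rmS m hm.
apply/eqP; rewrite eq_le; apply/andP; split.
  apply: (m_cont hm') => // k.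
  have /= [_ [[u0 _] hs]] := fk k; have [e1 _] := hs m hm.
  have := mulr_ge0 u0 (m_ge0 hm' (mQk k)); lra.
have : t * m A - m (\bigcup_k Ek k) <= 0; last by lra.
apply: (@le_pow2 _ (m A)) => k.
have /= [_ [[u0 u1] hs]] := fk k; have [e1 e2] := hs m hm.
have : m (Ek k) <= m (\bigcup_k Ek k) by apply: (mle hm') => // x ex; exists k.
move=> h; apply: le_trans (_ : uk k * m (Qk k) * 2 ^+ k <= _).
  by apply: ler_wpM2r; [exact: exprn_ge0 | lra].
by rewrite -mulrA e2; apply: ler_piMl => //; apply: (m_ge0 hm').
Qed.

Theorem parts s : good s -> forall k A, measurable A -> exists F : nat -> set T,
  [/\ forall j, measurable (F j), forall j, F j `<=` A,
     forall i j, i != j -> disj (F i) (F j),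
     forall x, A x -> exists2 j, (j <= k)%N & F j x
   & forall j, (j <= k)%N -> forall m, List.In m s -> m (F j) = m A / k.+1%:R].
Proof.
move=> gs; have rmS : forall m, List.In m s -> rm m by move=> m /gs [].
elim=> [|k IH] A mA.
  exists (fun j => if j == 0%N then A else set0); split.
  - by case=> [|j] //=; exact: measurable0.
  - by case=> //= j x.
  - by case=> [|i] [|j] //= _ x.
  - by move=> x Ax; exists 0%N.
  - by case=> // _ m hm /=; rewrite divr1.
have kp : (0 : R) < k.+2%:R by rewrite ltr0n.
have [E [mE EA hE]] := @fraction s gs A (1 / k.+2%:R) mA
  (ltac:(apply/andP; split; [apply: divr_ge0 => //; exact: ltW |
     rewrite ler_pdivrMr // mul1r ler1n //])).
have mA' : measurable (A `\` E) by apply: measurableD.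
have [F [mF FA dF cF vF]] := IH _ mA'.
exists (fun j => if j is j'.+1 then F j' else E); split.
- by case.
- by case=> [|j] x; [exact: EA | move=> /(FA _ _) []].
- case=> [|i] [|j] //= ij x.
  + by move=> ex /(FA _ _) [_ /(_ ex)].
  + by move=> /(FA _ _) [_ h] /h.
  + exact: dF.
- move=> x Ax; case: (pselect (E x)) => ex; first by exists 0%N.
  have [j jk fj] := cF x (conj Ax ex).
  by exists j.+1.
- case=> [|j] jk m hm.
    by rewrite hE // mul1r mulrC.
  rewrite vF // (mD (rmS m hm)) // hE //.
  have k1 : (k.+1%:R : R) != 0 by rewrite pnatr_eq0.
  have k2 : (k.+2%:R : R) != 0 by rewrite pnatr_eq0.
  rewrite -[k.+2]addn1 natrD.
  field; have h0 : (0:R) <= k%:R by [].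
  by apply/andP; split; apply/eqP => h; lra.
Qed.

End Halve.

Section Final.
Context d (T : measurableType d) (R : realType).
Local Open Scope ereal_scope.

Lemma rm_fin (mu : {finite_measure set T -> \bar R}) : rm (fun A => fine (mu A)).
Proof.
split.
- by move=> A _; apply: fine_ge0; apply: measure_ge0.
- move=> A B mA mB AB /=.
  by rewrite measureU // fineD //; apply: fin_num_measure.
- move=> F c mF incF bF /=.
  have mU : measurable (\bigcup_n F n) by apply: bigcupT_measurable.
  have nd : nondecreasing_seq F.
    move=> n k nk; apply/subsetPset.
    move/subnK: nk => <-; elim: (k - n)%N => //= j IH.
    by rewrite addSn; apply: subset_trans IH _; apply: incF.
  have h := @nondecreasing_cvg_mu _ _ _ mu F mF mU nd.
  have : mu (\bigcup_n F n) <= c%:E.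
    rewrite -(cvg_lim _ h) //; apply: lime_le; first exact: cvgP h.
    apply: nearW => n /=.
    by rewrite -(fineK (fin_num_measure _ _ (mF n))) lee_fin; apply: bF.
  by rewrite -(fineK (fin_num_measure _ _ mU)) lee_fin.
Qed.

Lemma na_of (mu : {finite_measure set T -> \bar R}) (f : set T -> \bar R) :
  (forall E, measurable E -> mu E = f E) -> nonatomic f ->
  na (fun A => fine (mu A)).
Proof.
move=> eq hf A mA /= pA; apply: contrapT => hno.
apply: (hf A); split => //.
  by rewrite -eq // -(fineK (fin_num_measure _ _ mA)) lte_fin.
move=> B mB BA; rewrite -!eq //.
have fA : mu A \is a fin_num by apply: fin_num_measure.
have fB : mu B \is a fin_num by apply: fin_num_measure.
have hB0 : (0 <= fine (mu B))%R by apply: fine_ge0; apply: measure_ge0.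
have hBA : (fine (mu B) <= fine (mu A))%R.
  by apply: fine_le => //; apply: le_measure => //; rewrite inE.
case: (lerP (fine (mu B)) 0) => h1.
  left; rewrite -(fineK fB); congr (_%:E); lra.
case: (lerP (fine (mu A)) (fine (mu B))) => h2.
  right; rewrite -(fineK fB) -(fineK fA); congr (_%:E); lra.
by exfalso; apply: hno; exists B; split.
Qed.

End Final.

Lemma In_seq (X : eqType) (x : X) (l : seq X) : x \in l -> List.In x l.
Proof.
elim: l => //= a l IH; rewrite in_cons => /orP [/eqP ->|/IH]; by [left|right].
Qed.

Local Open Scope ereal_scope.
Unset Implicit Arguments.

Theorem theorem1 (d : measure_display) (T : measurableType d) (R : realType)
  (r : nat) (hr : (0 < r)%N)
  (psi : 'I_r -> {charge set T -> \bar R})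
  (hna : forall i, charge_nonatomic (psi i)) :
  exists F : 'I_r -> set T,
    [/\ forall i, measurable (F i),
        forall i j, i != j -> F i `&` F j = set0,
        \bigcup_i F i = [set: T] &
        forall i j, psi i (F j) <= psi i (F i)].
Proof.
have [PN hPN] : {PN : 'I_r -> set T * set T & forall i,
   [/\ hahn_decomposition (psi i) (PN i).1 (PN i).2,
     nonatomic (fun E => psi i (E `&` (PN i).1)) &
     nonatomic (fun E => - psi i (E `&` (PN i).2))]}.
  apply: (@choice _ _ (fun i (p : set T * set T) =>
   [/\ hahn_decomposition (psi i) p.1 p.2,
     nonatomic (fun E => psi i (E `&` p.1)) &
     nonatomic (fun E => - psi i (E `&` p.2))])) => i.
  by have [P [N h]] := hna i; exists (P, N).
have hh : forall i, hahn_decomposition (psi i) (PN i).1 (PN i).2.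
  by move=> i; case: (hPN i).
pose pos i := fun A => fine (jordan_pos (hh i) A).
pose neg i := fun A => fine (jordan_neg (hh i) A).
have posE : forall i E, measurable E -> jordan_pos (hh i) E = psi i (E `&` (PN i).1).
  move=> i E mE; rewrite jordan_posE cjordan_posE /crestr0 mem_set //.
have negE : forall i E, measurable E -> jordan_neg (hh i) E = - psi i (E `&` (PN i).2).
  move=> i E mE; rewrite jordan_negE cjordan_negE /crestr0 mem_set //.
pose s := List.map pos (enum 'I_r) ++ List.map neg (enum 'I_r).
have inE : forall i, List.In i (enum 'I_r) by move=> i; apply: In_seq; rewrite mem_enum.
have gs : good s.
  move=> m /List.in_app_iff [] /List.in_map_iff [i [<- _]]; split.
  - exact: rm_fin.
  - apply: (@na_of _ _ _ _ (fun E => psi i (E `&` (PN i).1))).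
      exact: posE.
    by case: (hPN i).
  - exact: rm_fin.
  - apply: (@na_of _ _ _ _ (fun E => - psi i (E `&` (PN i).2))).
      exact: negE.
    by case: (hPN i).
have posS : forall i, List.In (pos i) s.
  by move=> i; apply/List.in_app_iff; left; apply: List.in_map.
have negS : forall i, List.In (neg i) s.
  by move=> i; apply/List.in_app_iff; right; apply: List.in_map.
have [F [mF FA dF cF vF]] := parts gs r.-1 measurableT.
have rE : r.-1.+1 = r := prednK hr.
exists (fun i : 'I_r => F i); split.
- by move=> i.
- by move=> i j ij; apply: disjI; apply: dF.
- apply/seteqP; split => // x _; have [j jk fj] := cF x I.
  have jr : (j < r)%N by rewrite -rE ltnS.
  by exists (Ordinal jr).
- move=> i j.
  have psiE : forall X, measurable X -> psi i X = (pos i X - neg i X)%:E.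
    move=> X mX; have [[mP _] [mN _] PNU PNI] := hh i.
    rewrite (charge_partition _ mX mP mN PNU PNI) EFinB /pos /neg !fineK.
    + by rewrite posE // negE // oppeK.
    + by apply: fin_num_measure.
    + by apply: fin_num_measure.
  have vE : forall k : 'I_r, psi i (F k) = ((pos i setT - neg i setT) / r%:R)%:E.
    move=> k; have kr : (k <= r.-1)%N by rewrite -ltnS rE.
    rewrite psiE // vF // vF // rE; congr (_%:E).
    by rewrite mulrBl.
  by rewrite !vE.
Qed.
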